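(* Under the sphere assumption, $\rho_d^*=\rho_d\in\mathbb R\cup\{+\infty\}$ for every $d\ge d^{min}$.
   Context: Complex setting: $n,m\in\mathbb N^*$; $z^\alpha=z_1^{\alpha_1}\cdots z_n^{\alpha_n}$, $|\alpha|=\sum\alpha_i$. $\mathbb R_d[\bar z,z]$: $\varphi(z)=\sum_{|\alpha|,|\beta|\le d}\varphi_{\alpha,\beta}\bar z^\alpha z^\beta$ with $\overline{\varphi_{\alpha,\beta}}=\varphi_{\beta,\alpha}$. $\Sigma_d[z]$: finite sums $\sum_j|p_j|^2$, $p_j$ holomorphic polynomials of degree $\le d$. Data $f\in\mathbb R_k[\bar z,z]$, $g_i\in\mathbb R_{k_i}[\bar z,z]$, $i=1,\dots,m$, with some nonzero coefficient having $|\alpha|=k$ (resp. $k_i$); $g_0:=1$, $k_0:=0$; $d^{min}=\max\{k,k_1,\dots,k_m\}$. $\mathcal H_d$: complex families $(y_{\alpha,\beta})_{|\alpha|,|\beta|\le d}$ with $\overline{y_{\alpha,\beta}}=y_{\beta,\alpha}$; $L_y(\varphi)=\sum\varphi_{\alpha,\beta}y_{\alpha,\beta}$; for $\varphi\in\mathbb R_l[\bar z,z]$, $M_e(\varphi y)$ is Hermitian, indexed by $|\alpha|,|\beta|\le e$, entries $\sum_{|\gamma|,|\delta|\le l}\varphi_{\gamma,\delta}y_{\alpha+\gamma,\beta+\delta}$. $\rho_d:=\inf\{L_y(f):y\in\mathcal H_d,\ y_{0,0}=1,\ M_{d-k_i}(g_iy)\succeq0,\ i=0,\dots,m\}$, $\rho_d^*:=\sup\{\lambda\in\mathbb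 R:f-\lambda=\sum_{i=0}^m\sigma_ig_i,\ \sigma_i\in\Sigma_{d-k_i}[z]\}$, with $\inf\emptyset=+\infty$, $\sup\emptyset=-\infty$. Sphere assumption: for some $R>0$ the constraints include $g_i=R^2-\sum_j|z_j|^2$ and $g_{i'}=-g_i$. *)

(* Defs.v *)
From Stdlib Require Import Reals List Arith.
Import ListNotations.
Open Scope R_scope.

Record C := mkC { re : R; im : R }.
Definition C0 : C := mkC 0 0.
Definition C1 : C := mkC 1 0.
Definition RtoC (r : R) : C := mkC r 0.
Definition Cadd (a b : C) : C := mkC (re a + re b) (im a + im b).
Definition Copp (a : C) : C := mkC (- re a) (- im a).
Definition Csub (a b : C) : C := Cadd a (Copp b).
Definition Cmul (a b : C) : C :=
  mkC (re a * re b - im a * im b) (re a * im b + im a * re b).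
Definition Cconj (a : C) : C := mkC (re a) (- im a).

Definition lsum {A : Type} (l : list A) (F : A -> C) : C :=
  fold_right (fun a acc => Cadd (F a) acc) C0 l.

(* a multi-index alpha in N^n is a list of naturals of length n *)
Definition mi := list nat.
Definition deg (a : mi) : nat := fold_right Nat.add 0%nat a.
Fixpoint madd (a b : mi) : mi :=
  match a, b with
  | x :: a', y :: b' => (x + y)%nat :: madd a' b'
  | _, _ => []
  end.
(* all multi-indices alpha in N^n with |alpha| <= d, each listed once *)
Fixpoint mis (n d : nat) : list mi :=
  match n with
  | O => [ [] ]
  | S n' => flat_map (fun a => map (cons a) (mis n' (d - a))) (seq 0 (S d))
  end.
Definition mi_eqb (a b : mi) : bool :=
  if list_eq_dec Nat.eq_dec a b then true else false.

(* phi alpha beta = coefficient phi_{alpha,beta} of zbar^alpha z^beta *)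
Definition cpoly := mi -> mi -> C.

(* phi in R_d[zbar,z] (n variables): Hermitian coefficients, supported on
   |alpha|,|beta| <= d.  The same shape describes H_d (moment families). *)
Definition in_Rd (n d : nat) (phi : cpoly) : Prop :=
  (forall a b, Cconj (phi a b) = phi b a) /\
  (forall a b, ~ (In a (mis n d) /\ In b (mis n d)) -> phi a b = C0).

Definition has_deg (n k : nat) (phi : cpoly) : Prop :=
  in_Rd n k phi /\
  exists a b, In a (mis n k) /\ In b (mis n k) /\ deg a = k /\ phi a b <> C0.

Definition one_poly (n : nat) : cpoly := fun a b =>
  if andb (mi_eqb a (repeat 0%nat n)) (mi_eqb b (repeat 0%nat n)) then C1 else C0.

(* R^2 - sum_j |z_j|^2 = R^2 - sum_j zbar_j z_j *)
Definition sphere_poly (n : nat) (Rr : R) : cpoly := fun a b =>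
  if mi_eqb a b then
    (if mi_eqb a (repeat 0%nat n) then RtoC (Rr * Rr)
     else if andb (Nat.eqb (length a) n) (Nat.eqb (deg a) 1) then RtoC (-1)
     else C0)
  else C0.

Definition popp (phi : cpoly) : cpoly := fun a b => Copp (phi a b).

Definition pmul (n : nat) (phi : cpoly) (da : nat) (psi : cpoly) (db : nat) : cpoly :=
  fun a b =>
    lsum (mis n da) (fun g => lsum (mis n da) (fun h =>
    lsum (mis n db) (fun e => lsum (mis n db) (fun t =>
      if andb (mi_eqb (madd g e) a) (mi_eqb (madd h t) b)
      then Cmul (phi g h) (psi e t) else C0)))).

(* holomorphic polynomials of degree <= e: p alpha = coefficient of z^alpha *)
Definition hpoly := mi -> C.
Definition hdeg_le (n e : nat) (p : hpoly) : Prop :=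
  forall a, ~ In a (mis n e) -> p a = C0.
(* sum_j |p_j|^2 : coefficient of zbar^alpha z^beta is sum_j conj(p_j alpha) p_j beta *)
Definition sos_of (ps : list hpoly) : cpoly := fun a b =>
  lsum ps (fun p => Cmul (Cconj (p a)) (p b)).

Definition Ly (n d : nat) (phi y : cpoly) : R :=
  re (lsum (mis n d) (fun a => lsum (mis n d) (fun b => Cmul (phi a b) (y a b)))).

Definition locmat (n e l : nat) (phi y : cpoly) : mi -> mi -> C := fun a b =>
  lsum (mis n l) (fun g => lsum (mis n l) (fun h =>
    Cmul (phi g h) (y (madd a g) (madd b h)))).

Definition psd (n e : nat) (M : mi -> mi -> C) : Prop :=
  (forall a b, In a (mis n e) -> In b (mis n e) -> Cconj (M a b) = M b a) /\
  (forall v : mi -> C,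
     0 <= re (lsum (mis n e) (fun a => lsum (mis n e) (fun b =>
              Cmul (Cconj (v a)) (Cmul (M a b) (v b)))))).

Inductive ER := Fin (r : R) | PInf | MInf.

Definition is_ext_inf (S : R -> Prop) (e : ER) : Prop :=
  match e with
  | PInf => forall x, ~ S x
  | MInf => forall M, exists x, S x /\ x < M
  | Fin r => (forall x, S x -> r <= x) /\
             (forall r', (forall x, S x -> r' <= x) -> r' <= r)
  end.

Definition is_ext_sup (S : R -> Prop) (e : ER) : Prop :=
  match e with
  | MInf => forall x, ~ S x
  | PInf => forall M, exists x, S x /\ M < x
  | Fin r => (forall x, S x -> x <= r) /\
             (forall r', (forall x, S x -> x <= r') -> r <= r')
  end.

(* g_0 := 1, k_0 := 0; g i, kg i for i = 1..m *)
Definition gfull (n : nat) (g : nat -> cpoly) (i : nat) : cpoly :=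
  match i with O => one_poly n | _ => g i end.
Definition kfull (kg : nat -> nat) (i : nat) : nat :=
  match i with O => 0%nat | _ => kg i end.

Definition dmin (m k : nat) (kg : nat -> nat) : nat :=
  fold_right Nat.max k (map kg (seq 1 m)).

(* values L_y(f) over feasible y; rho_d is its infimum *)
Definition moment_values (n m d : nat) (f : cpoly) (g : nat -> cpoly) (kg : nat -> nat)
  : R -> Prop := fun x =>
  exists y : cpoly, in_Rd n d y /\ y (repeat 0%nat n) (repeat 0%nat n) = C1 /\
    (forall i, (i <= m)%nat ->
       psd n (d - kfull kg i) (locmat n (d - kfull kg i) (kfull kg i) (gfull n g i) y)) /\
    x = Ly n d f y.

(* lambdas with f - lambda = sum_i sigma_i g_i, sigma_i in Sigma_{d - k_i}[z];
   rho_d^* is its supremum *)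
Definition sos_values (n m d : nat) (f : cpoly) (g : nat -> cpoly) (kg : nat -> nat)
  : R -> Prop := fun lam =>
  exists ps : nat -> list hpoly,
    (forall i, (i <= m)%nat -> forall p, In p (ps i) -> hdeg_le n (d - kfull kg i) p) /\
    (forall a b,
       Csub (f a b) (Cmul (RtoC lam) (one_poly n a b)) =
       lsum (seq 0 (S m)) (fun i =>
         pmul n (sos_of (ps i)) (d - kfull kg i) (gfull n g i) (kfull kg i) a b)).

(* Main.v *)
Require Import Defs.
From Stdlib Require Import Reals List Arith Lia Lra Classical FunctionalExtensionality.
Import ListNotations.
Require Import Defs.
Open Scope R_scope.

Lemma C_ext (a b : C) : re a = re b -> im a = im b -> a = b.
Proof. destruct a, b; simpl; intros; subst; reflexivity. Qed.

Ltac csplit := apply C_ext; cbn [re im Cadd Cmul Copp Csub Cconj RtoC C0 C1].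

Definition rsum {A : Type} (l : list A) (F : A -> R) : R :=
  fold_right (fun a acc => F a + acc) 0 l.


Lemma re_lsum {A : Type} (l : list A) F : re (lsum l F) = rsum l (fun x => re (F x)).
Proof. induction l; simpl; [reflexivity|]. rewrite IHl; reflexivity. Qed.
Lemma im_lsum {A : Type} (l : list A) F : im (lsum l F) = rsum l (fun x => im (F x)).
Proof. induction l; simpl; [reflexivity|]. rewrite IHl; reflexivity. Qed.

Lemma lsum_ext {A : Type} (l : list A) F G : (forall x, In x l -> F x = G x) -> lsum l F = lsum l G.
Proof. induction l; simpl; intros H; [reflexivity|]. rewrite H, IHl; auto. Qed.
Lemma rsum_ext {A : Type} (l : list A) F G : (forall x, In x l -> F x = G x) -> rsum l F = rsum l G.
Proof. induction l; simpl; intros H; [reflexivity|]. rewrite H, IHl; auto. Qed.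

Lemma lsum_app {A : Type} (l1 l2 : list A) F : lsum (l1 ++ l2) F = Cadd (lsum l1 F) (lsum l2 F).
Proof. induction l1; simpl. csplit; ring. rewrite IHl1. csplit; ring. Qed.
Lemma rsum_app {A : Type} (l1 l2 : list A) F : rsum (l1 ++ l2) F = rsum l1 F + rsum l2 F.
Proof. induction l1; simpl. ring. rewrite IHl1. ring. Qed.

Lemma lsum_add {A : Type} (l : list A) F G : lsum l (fun x => Cadd (F x) (G x)) = Cadd (lsum l F) (lsum l G).
Proof. induction l; simpl. csplit; ring. rewrite IHl. csplit; ring. Qed.
Lemma rsum_add {A : Type} (l : list A) F G : rsum l (fun x => F x + G x) = rsum l F + rsum l G.
Proof. induction l; simpl. ring. rewrite IHl. ring. Qed.

Lemma lsum_mul_l {A : Type} (l : list A) c F : lsum l (fun x => Cmul c (F x)) = Cmul c (lsum l F).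
Proof. induction l; simpl. csplit; ring. rewrite IHl. csplit; ring. Qed.
Lemma lsum_mul_r {A : Type} (l : list A) c F : lsum l (fun x => Cmul (F x) c) = Cmul (lsum l F) c.
Proof. induction l; simpl. csplit; ring. rewrite IHl. csplit; ring. Qed.
Lemma rsum_mul_l {A : Type} (l : list A) c F : rsum l (fun x => c * F x) = c * rsum l F.
Proof. induction l; simpl. ring. rewrite IHl. ring. Qed.
Lemma rsum_opp {A : Type} (l : list A) F : rsum l (fun x => - F x) = - rsum l F.
Proof. induction l; simpl. ring. rewrite IHl. ring. Qed.
Lemma lsum_opp {A : Type} (l : list A) F : lsum l (fun x => Copp (F x)) = Copp (lsum l F).
Proof. induction l; simpl. csplit; ring. rewrite IHl. csplit; ring. Qed.

Lemma lsum_zero {A : Type} (l : list A) F : (forall x, In x l -> F x = C0) -> lsum l F = C0.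
Proof. induction l; simpl; intros H; [reflexivity|]. rewrite H, IHl; auto. csplit; ring. Qed.
Lemma rsum_zero {A : Type} (l : list A) F : (forall x, In x l -> F x = 0) -> rsum l F = 0.
Proof. induction l; simpl; intros H; [reflexivity|]. rewrite H, IHl; auto. ring. Qed.

Lemma lsum_conj {A : Type} (l : list A) F : Cconj (lsum l F) = lsum l (fun x => Cconj (F x)).
Proof. induction l; simpl. csplit; ring. rewrite <- IHl. csplit; ring. Qed.

Lemma lsum_single {A : Type} (l : list A) F x : NoDup l -> In x l ->
  (forall y, In y l -> y <> x -> F y = C0) -> lsum l F = F x.
Proof.
  induction l as [|a l IH]; simpl; intros Hnd Hin H; [contradiction|].
  inversion Hnd; subst. destruct Hin as [<-|Hin].
  - rewrite lsum_zero. csplit; ring. intros y Hy. apply H; auto. intro; subst; contradiction.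
  - rewrite (H a), IH; auto. csplit; ring. intro; subst; contradiction.
Qed.
Lemma rsum_single {A : Type} (l : list A) F x : NoDup l -> In x l ->
  (forall y, In y l -> y <> x -> F y = 0) -> rsum l F = F x.
Proof.
  induction l as [|a l IH]; simpl; intros Hnd Hin H; [contradiction|].
  inversion Hnd; subst. destruct Hin as [<-|Hin].
  - rewrite rsum_zero. ring. intros y Hy. apply H; auto. intro; subst; contradiction.
  - rewrite (H a), IH; auto. ring. intro; subst; contradiction.
Qed.

Lemma lsum_two {A : Type} (l : list A) F x y : NoDup l -> In x l -> In y l -> x <> y ->
  (forall z, In z l -> z <> x -> z <> y -> F z = C0) -> lsum l F = Cadd (F x) (F y).
Proof.
  induction l as [|a l IH]; simpl; intros Hnd Hx Hy Hxy H; [contradiction|].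
  inversion Hnd; subst. destruct Hx as [<-|Hx]; destruct Hy as [<-|Hy].
  - contradiction.
  - f_equal. apply lsum_single; auto. intros z Hz Hzy. apply H; auto. intro; subst; contradiction.
  - rewrite (lsum_single l F x); auto. csplit; ring. intros z Hz Hzx. apply H; auto. intro; subst; contradiction.
  - rewrite (H a), IH; auto. csplit; ring. intro; subst; contradiction. intro; subst; contradiction.
Qed.



Lemma lsum_swap {A B : Type} (l1 : list A) (l2 : list B) F :
  lsum l1 (fun a => lsum l2 (fun b => F a b)) = lsum l2 (fun b => lsum l1 (fun a => F a b)).
Proof.
  induction l1; simpl. symmetry; apply lsum_zero; auto.
  rewrite IHl1. rewrite <- lsum_add. reflexivity.
Qed.
Lemma rsum_swap {A B : Type} (l1 : list A) (l2 : list B) F :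
  rsum l1 (fun a => rsum l2 (fun b => F a b)) = rsum l2 (fun b => rsum l1 (fun a => F a b)).
Proof.
  induction l1; simpl. symmetry; apply rsum_zero; auto.
  rewrite IHl1. rewrite <- rsum_add. reflexivity.
Qed.
Lemma lsum_flat_map {A B : Type} (f : A -> list B) l F :
  lsum (flat_map f l) F = lsum l (fun a => lsum (f a) F).
Proof. induction l; simpl; auto. rewrite lsum_app, IHl; auto. Qed.
Lemma rsum_flat_map {A B : Type} (f : A -> list B) l F :
  rsum (flat_map f l) F = rsum l (fun a => rsum (f a) F).
Proof. induction l; simpl; auto. rewrite rsum_app, IHl; auto. Qed.

Lemma NoDup_flat_map' {A B : Type} (f : A -> list B) l :
  NoDup l -> (forall x, In x l -> NoDup (f x)) ->
  (forall x y z, In x l -> In y l -> x <> y -> In z (f x) -> In z (f y) -> False) ->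
  NoDup (flat_map f l).
Proof.
  induction l as [|a l IH]; intros Hnd Hf Hd; simpl; [constructor|].
  inversion Hnd; subst. apply NoDup_app.
  - apply Hf; simpl; auto.
  - apply IH; auto. intros x Hx; apply Hf; simpl; auto. intros x y z Hx Hy; apply Hd; simpl; auto.
  - intros z Hz Hz2. apply in_flat_map in Hz2 as [y [Hy Hzy]].
    apply (Hd a y z); simpl; auto. intro; subst; contradiction.
Qed.
Lemma mi_eqb_true (a b : mi) : mi_eqb a b = true <-> a = b.
Proof. unfold mi_eqb. destruct (list_eq_dec Nat.eq_dec a b); split; congruence. Qed.
Lemma mi_eqb_refl (a : mi) : mi_eqb a a = true.
Proof. apply mi_eqb_true; auto. Qed.
Lemma mi_eqb_false (a b : mi) : a <> b -> mi_eqb a b = false.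
Proof. intros H. destruct (mi_eqb a b) eqn:E; auto. apply mi_eqb_true in E; contradiction. Qed.

Lemma mis_char n d a : In a (mis n d) <-> length a = n /\ (deg a <= d)%nat.
Proof.
  revert d a; induction n as [|n IH]; intros d a; cbn [mis].
  - split. intros [<-|[]]; simpl; split; auto; lia.
    intros [H1 H2]; destruct a; simpl in *; auto; lia.
  - rewrite in_flat_map. split.
    + intros [x [Hx Ha]]. apply in_seq in Hx. apply in_map_iff in Ha as [b [<- Hb]].
      apply IH in Hb as [Hb1 Hb2]. simpl. split; [lia|]. lia.
    + intros [H1 H2]. destruct a as [|x b]; [simpl in H1; lia|]. simpl in H1.
      unfold deg in H2; simpl in H2; fold (deg b) in H2.
      exists x; split. apply in_seq; lia. apply in_map. apply IH; split; lia.
Qed.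

Lemma NoDup_mis n d : NoDup (mis n d).
Proof.
  revert d; induction n as [|n IH]; intros d; cbn [mis].
  - repeat constructor; auto.
  - apply NoDup_flat_map'. apply seq_NoDup.
    + intros x _. apply NoDup_map_NoDup_ForallPairs; auto. intros u v _ _ H; injection H; auto.
    + intros x y z _ _ Hxy H1 H2. apply in_map_iff in H1 as [u [<- _]].
      apply in_map_iff in H2 as [v [Hv _]]. injection Hv; intros; subst; auto.
Qed.

Lemma deg_cons x a : deg (x :: a) = (x + deg a)%nat.
Proof. reflexivity. Qed.

Lemma madd_len a b n : length a = n -> length b = n -> length (madd a b) = n.
Proof.
  revert b n; induction a as [|x a IH]; intros [|y b] n; simpl; intros H1 H2; try lia.
  rewrite (IH b (length a)); lia.
Qed.
Lemma madd_deg a b : length a = length b -> deg (madd a b) = (deg a + deg b)%nat.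
Proof.
  revert b; induction a as [|x a IH]; intros [|y b]; simpl; intros H; auto; try discriminate.
  unfold deg in *; simpl. rewrite IH; [lia|]. lia.
Qed.
Lemma madd_In n p q a b : In a (mis n p) -> In b (mis n q) -> In (madd a b) (mis n (p + q)).
Proof.
  rewrite !mis_char. intros [H1 H2] [H3 H4]. split. apply madd_len; auto.
  rewrite madd_deg; lia.
Qed.
Lemma madd_zero_r a : madd a (repeat 0%nat (length a)) = a.
Proof. induction a; simpl; auto. rewrite IHa, Nat.add_0_r; auto. Qed.
Lemma deg_repeat0 n : deg (repeat 0%nat n) = 0%nat.
Proof. induction n; simpl; auto. Qed.
Lemma deg0_repeat a : deg a = 0%nat -> a = repeat 0%nat (length a).
Proof. induction a as [|x a IH]; [reflexivity|]. rewrite deg_cons. intros H. simpl. f_equal; [lia|]. apply IH; lia. Qed.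
Lemma mis0 n : mis n 0 = [repeat 0%nat n].
Proof. induction n; simpl; auto. rewrite IHn; auto. Qed.
Lemma repeat_In n d : In (repeat 0%nat n) (mis n d).
Proof. apply mis_char. rewrite repeat_length, deg_repeat0. split; auto; lia. Qed.
Lemma mis_mono n d d' a : (d <= d')%nat -> In a (mis n d) -> In a (mis n d').
Proof. rewrite !mis_char; intros ? [? ?]; split; auto; lia. Qed.

Lemma decomp_mi a : (1 <= deg a)%nat -> exists a' e,
  madd a' e = a /\ length a' = length a /\ length e = length a /\ deg e = 1%nat /\ deg a' = (deg a - 1)%nat.
Proof.
  induction a as [|x a IH]; intros H; [unfold deg in H; simpl in H; lia|].
  rewrite deg_cons in H |- *. simpl length. destruct x as [|x].
  - destruct IH as [a' [e [H1 [H2 [H3 [H4 H5]]]]]]; [lia|].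
    exists (0%nat :: a'), (0%nat :: e). rewrite !deg_cons. simpl. rewrite H1, H2, H3. repeat split; auto; lia.
  - exists (x :: a), (1%nat :: repeat 0%nat (length a)). rewrite !deg_cons, deg_repeat0. simpl.
    rewrite madd_zero_r, repeat_length. repeat split; auto; try lia. f_equal; lia.
Qed.
Definition padd (x y : cpoly) : cpoly := fun a b => Cadd (x a b) (y a b).
Definition pscal (r : R) (x : cpoly) : cpoly := fun a b => Cmul (RtoC r) (x a b).
Definition pzero : cpoly := fun _ _ => C0.
Definition hscale (r : R) (p : hpoly) : hpoly := fun a => Cmul (RtoC r) (p a).

Definition Qset (n m d : nat) (g : nat -> cpoly) (kg : nat -> nat) (x : cpoly) : Prop :=
  exists ps : nat -> list hpoly,
    (forall i, (i <= m)%nat -> forall p, In p (ps i) -> hdeg_le n (d - kfull kg i) p) /\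
    (forall a b, x a b =
       lsum (seq 0 (S m)) (fun i =>
         pmul n (sos_of (ps i)) (d - kfull kg i) (gfull n g i) (kfull kg i) a b)).

Lemma pmul_ext n phi psi da ga db : (forall a b, phi a b = psi a b) ->
  pmul n phi da ga db = pmul n psi da ga db.
Proof. intros H. assert (phi = psi) as -> by (do 2 (apply functional_extensionality; intro); auto). auto. Qed.

Lemma pmul_add1 n phi psi da ga db a b :
  pmul n (fun a b => Cadd (phi a b) (psi a b)) da ga db a b =
  Cadd (pmul n phi da ga db a b) (pmul n psi da ga db a b).
Proof.
  unfold pmul. rewrite <- lsum_add. apply lsum_ext; intros. rewrite <- lsum_add. apply lsum_ext; intros.
  rewrite <- lsum_add. apply lsum_ext; intros. rewrite <- lsum_add. apply lsum_ext; intros.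
  destruct (andb _ _); csplit; ring.
Qed.

Lemma pmul_scal1 n c phi da ga db a b :
  pmul n (fun a b => Cmul c (phi a b)) da ga db a b = Cmul c (pmul n phi da ga db a b).
Proof.
  unfold pmul. rewrite <- lsum_mul_l. apply lsum_ext; intros. rewrite <- lsum_mul_l. apply lsum_ext; intros.
  rewrite <- lsum_mul_l. apply lsum_ext; intros. rewrite <- lsum_mul_l. apply lsum_ext; intros.
  destruct (andb _ _); csplit; ring.
Qed.

Lemma pmul_zero1 n phi da ga db a b : (forall a b, phi a b = C0) -> pmul n phi da ga db a b = C0.
Proof.
  intros H. unfold pmul. repeat (apply lsum_zero; intros).
  destruct (andb _ _); auto. rewrite H; csplit; ring.
Qed.

Lemma sos_of_nil a b : sos_of [] a b = C0.
Proof. reflexivity. Qed.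
Lemma sos_of_app l1 l2 a b : sos_of (l1 ++ l2) a b = Cadd (sos_of l1 a b) (sos_of l2 a b).
Proof. unfold sos_of. apply lsum_app. Qed.
Lemma sos_of_scale s l a b : 0 <= s ->
  sos_of (map (hscale (sqrt s)) l) a b = Cmul (RtoC s) (sos_of l a b).
Proof.
  intros Hs. unfold sos_of. induction l as [|p l IH]; simpl. csplit; ring.
  rewrite IH. unfold hscale. pose proof (sqrt_sqrt s Hs) as E. set (r := sqrt s) in *.
  rewrite <- E. csplit; ring.
Qed.

Lemma Q_ext n m d g kg x y : (forall a b, x a b = y a b) -> Qset n m d g kg x -> Qset n m d g kg y.
Proof. intros H [ps [H1 H2]]. exists ps; split; auto. intros; rewrite <- H; auto. Qed.

Lemma Q_zero n m d g kg : Qset n m d g kg pzero.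
Proof.
  exists (fun _ => []). split. intros i _ p []. intros a b. symmetry. apply lsum_zero; intros.
  apply pmul_zero1; auto.
Qed.

Lemma Q_add n m d g kg x y : Qset n m d g kg x -> Qset n m d g kg y -> Qset n m d g kg (padd x y).
Proof.
  intros [ps [H1 H2]] [qs [H3 H4]]. exists (fun i => ps i ++ qs i). split.
  - intros i Hi p Hp. apply in_app_or in Hp as [Hp|Hp]; eauto.
  - intros a b. unfold padd. rewrite (H2 a b), (H4 a b), <- lsum_add. apply lsum_ext; intros i _.
    rewrite (pmul_ext _ (sos_of (ps i ++ qs i)) (fun a b => Cadd (sos_of (ps i) a b) (sos_of (qs i) a b))).
    rewrite pmul_add1; auto. intros; apply sos_of_app.
Qed.

Lemma Q_scal n m d g kg s x : 0 <= s -> Qset n m d g kg x -> Qset n m d g kg (pscal s x).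
Proof.
  intros Hs [ps [H1 H2]]. exists (fun i => map (hscale (sqrt s)) (ps i)). split.
  - intros i Hi p Hp. apply in_map_iff in Hp as [q [<- Hq]]. intros a Ha. unfold hscale.
    rewrite (H1 i Hi q Hq a Ha). csplit; ring.
  - intros a b. unfold pscal. rewrite (H2 a b), <- lsum_mul_l. apply lsum_ext; intros i _.
    rewrite (pmul_ext _ (sos_of (map (hscale (sqrt s)) (ps i))) (fun a b => Cmul (RtoC s) (sos_of (ps i) a b))).
    rewrite pmul_scal1; auto. intros; apply sos_of_scale; auto.
Qed.

Lemma Q_sum {A : Type} n m d g kg (l : list A) (F : A -> cpoly) :
  (forall x, In x l -> Qset n m d g kg (F x)) ->
  Qset n m d g kg (fun a b => lsum l (fun x => F x a b)).
Proof.
  induction l as [|x l IH]; intros H; simpl.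
  - apply Q_zero.
  - apply (Q_add _ _ _ _ _ (F x) (fun a b => lsum l (fun x => F x a b))).
    apply H; simpl; auto. apply IH; intros; apply H; simpl; auto.
Qed.

Lemma Q_gen n m d g kg i p : (i <= m)%nat -> hdeg_le n (d - kfull kg i) p ->
  Qset n m d g kg (pmul n (sos_of [p]) (d - kfull kg i) (gfull n g i) (kfull kg i)).
Proof.
  intros Hi Hp. exists (fun j => if Nat.eqb j i then [p] else []). split.
  - intros j Hj q Hq. destruct (Nat.eqb_spec j i); [subst|destruct Hq].
    destruct Hq as [<-|[]]; auto.
  - intros a b. rewrite (lsum_single _ _ i). rewrite Nat.eqb_refl; auto.
    apply seq_NoDup. apply in_seq; lia.
    intros j _ Hj. apply Nat.eqb_neq in Hj. rewrite Hj. apply pmul_zero1; auto.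
Qed.
Lemma lsum_one {A : Type} (x : A) F : lsum [x] F = F x.
Proof. unfold lsum; simpl. csplit; ring. Qed.

Definition ind (c : mi) : hpoly := fun x => if mi_eqb x c then C1 else C0.

Lemma dlt_val c x y : sos_of [ind c] x y = if andb (mi_eqb x c) (mi_eqb y c) then C1 else C0.
Proof.
  unfold sos_of, ind. rewrite lsum_one.
  destruct (mi_eqb x c), (mi_eqb y c); simpl; csplit; ring.
Qed.

Definition supp (n d : nat) (phi : cpoly) : Prop :=
  forall a b, ~ (In a (mis n d) /\ In b (mis n d)) -> phi a b = C0.

Lemma pmul_one n d phi a b : supp n d phi -> pmul n phi d (one_poly n) 0 a b = phi a b.
Proof.
  intros Hs. unfold pmul. rewrite mis0.
  transitivity (lsum (mis n d) (fun G => lsum (mis n d) (fun H =>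
     if andb (mi_eqb G a) (mi_eqb H b) then phi G H else C0))).
  - apply lsum_ext; intros G HG. apply lsum_ext; intros H HH. rewrite !lsum_one.
    apply mis_char in HG as [HG _]. apply mis_char in HH as [HH _].
    rewrite <- HG, madd_zero_r. rewrite HG, <- HH, madd_zero_r, HH.
    unfold one_poly. rewrite !mi_eqb_refl. simpl.
    destruct (andb _ _); auto. csplit; ring.
  - destruct (classic (In a (mis n d) /\ In b (mis n d))) as [[Ha Hb]|Hn].
    + rewrite (lsum_single _ _ a); auto. rewrite (lsum_single _ _ b); auto.
      rewrite !mi_eqb_refl; auto. apply NoDup_mis.
      intros y _ Hy. rewrite mi_eqb_refl, (mi_eqb_false _ _ Hy). auto.
      apply NoDup_mis. intros y _ Hy. apply lsum_zero; intros. rewrite (mi_eqb_false _ _ Hy). auto.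
    + rewrite (Hs a b Hn). apply lsum_zero; intros G HG. apply lsum_zero; intros H HH.
      destruct (mi_eqb G a) eqn:E1, (mi_eqb H b) eqn:E2; simpl; auto.
      apply mi_eqb_true in E1; apply mi_eqb_true in E2; subst. exfalso; auto.
Qed.

Lemma sos_supp n d l : (forall p, In p l -> hdeg_le n d p) -> supp n d (sos_of l).
Proof.
  intros H a b Hn. unfold sos_of. apply lsum_zero. intros p Hp.
  destruct (classic (In a (mis n d))) as [Ha|Ha].
  - assert (~ In b (mis n d)) by tauto. rewrite (H p Hp b); auto. csplit; ring.
  - rewrite (H p Hp a); auto. csplit; ring.
Qed.

Lemma Q_sos n m d g kg l : (forall p, In p l -> hdeg_le n d p) -> Qset n m d g kg (sos_of l).
Proof.
  intros H. assert (Qset n m d g kg (fun a b => lsum l (fun p => sos_of [p] a b))).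
  { apply Q_sum. intros p Hp. eapply Q_ext; [|apply (Q_gen n m d g kg 0 p)].
    - intros a b. cbn [kfull gfull]. rewrite Nat.sub_0_r. apply pmul_one.
      apply sos_supp. intros q [<-|[]]. auto.
    - lia.
    - cbn [kfull]. rewrite Nat.sub_0_r. auto. }
  eapply Q_ext; [|exact H0]. intros a b. clear. unfold sos_of. apply lsum_ext; intros x _. exact (lsum_one x (fun p => Cmul (Cconj (p a)) (p b))).
Qed.
Lemma mi_eqb_sym a b : mi_eqb a b = mi_eqb b a.
Proof. destruct (mi_eqb a b) eqn:E, (mi_eqb b a) eqn:F; auto.
  apply mi_eqb_true in E; subst; rewrite mi_eqb_refl in F; discriminate.
  apply mi_eqb_true in F; subst; rewrite mi_eqb_refl in E; discriminate. Qed.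

Lemma pmul_ind n da phi db c x y : In c (mis n da) ->
  pmul n (sos_of [ind c]) da phi db x y =
  lsum (mis n db) (fun e => lsum (mis n db) (fun t =>
     if andb (mi_eqb (madd c e) x) (mi_eqb (madd c t) y) then phi e t else C0)).
Proof.
  intros Hc. unfold pmul. rewrite (lsum_single _ _ c); [|apply NoDup_mis|auto|].
  - rewrite (lsum_single _ _ c); [|apply NoDup_mis|auto|].
    + apply lsum_ext; intros e _; apply lsum_ext; intros t _. rewrite dlt_val, !mi_eqb_refl. simpl.
      destruct (andb _ _); auto. csplit; ring.
    + intros H _ HH. repeat (apply lsum_zero; intros). rewrite dlt_val, (mi_eqb_false _ _ HH).
      rewrite Bool.andb_false_r. destruct (andb _ _); auto. csplit; ring.
  - intros G _ HG. repeat (apply lsum_zero; intros). rewrite dlt_val, (mi_eqb_false _ _ HG).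
    simpl. destruct (andb _ _); auto. csplit; ring.
Qed.

Lemma pmul_ind_sphere n da Rr c x y : In c (mis n da) ->
  pmul n (sos_of [ind c]) da (sphere_poly n Rr) 1 x y =
  lsum (mis n 1) (fun e => if andb (mi_eqb (madd c e) x) (mi_eqb (madd c e) y)
                           then sphere_poly n Rr e e else C0).
Proof.
  intros Hc. rewrite pmul_ind; auto. apply lsum_ext; intros e He.
  rewrite (lsum_single _ _ e); auto. apply NoDup_mis.
  intros t _ Ht. destruct (andb _ _); auto. unfold sphere_poly.
  rewrite mi_eqb_false; auto.
Qed.



Definition Dset n m d g kg (x : cpoly) (t : R) : Prop :=
  Qset n m d g kg (fun a b => Csub (Cmul (RtoC t) (one_poly n a b)) (x a b)).

Lemma OU_mono n m d g kg i Rr : (1 <= i <= m)%nat -> g i = sphere_poly n Rr -> kg i = 1%nat ->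
  forall N a, deg a = N -> In a (mis n d) -> exists t, Dset n m d g kg (sos_of [ind a]) t.
Proof.
  intros Hi Hg Hk N. induction N as [|N IH]; intros a Hda Ha.
  - exists 1. apply (Q_ext _ _ _ _ _ pzero); [|apply Q_zero].
    apply mis_char in Ha as [Hl _]. apply deg0_repeat in Hda. rewrite Hl in Hda. subst a.
    intros x y. rewrite dlt_val. unfold one_poly, pzero. destruct (andb _ _); csplit; ring.
  - destruct (decomp_mi a) as [a' [e [He1 [He2 [He3 [He4 He5]]]]]]; [lia|].
    pose proof Ha as Ha0. apply mis_char in Ha as [Hl Hd].
    assert (Ha' : In a' (mis n (d - 1))) by (apply mis_char; split; lia).
    destruct (IH a') as [t' Ht']; [lia| apply (mis_mono n (d-1)); auto; lia |].
    set (z := repeat 0%nat n).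
    assert (Hz : In z (mis n 1)) by apply repeat_In.
    assert (He : In e (mis n 1)) by (apply mis_char; split; lia).
    assert (Hze : z <> e) by (intro Hze; rewrite <- Hze in He4; unfold z in He4; rewrite deg_repeat0 in He4; lia).
    assert (Hki : kfull kg i = 1%nat) by (destruct i; [lia|]; simpl; auto).
    assert (Hgi : gfull n g i = sphere_poly n Rr) by (destruct i; [lia|]; simpl; auto).
    set (X1 := pscal (Rr * Rr) (fun a b => Csub (Cmul (RtoC t') (one_poly n a b)) (sos_of [ind a'] a b))).
    set (X2 := pmul n (sos_of [ind a']) (d - 1) (sphere_poly n Rr) 1).
    set (X3 := fun x y => lsum (mis n 1) (fun w =>
                 if orb (mi_eqb w z) (mi_eqb w e) then C0 else sos_of [ind (madd a' w)] x y)).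
    exists (Rr * Rr * t').
    apply (Q_ext _ _ _ _ _ (padd (padd X1 X2) X3)).
    2:{ apply Q_add; [apply Q_add|].
        - apply Q_scal; auto. apply Rle_0_sqr.
        - pose proof (Q_gen n m d g kg i (ind a')) as HQ. rewrite Hki, Hgi in HQ. apply HQ; [lia|].
          intros b Hb. unfold ind. rewrite mi_eqb_false; auto. intro; subst; auto.
        - unfold X3. apply Q_sum. intros w Hw. destruct (orb _ _). apply Q_zero.
          apply Q_sos. intros p [<-|[]] b Hb. unfold ind. rewrite mi_eqb_false; auto.
          intro; subst b. apply Hb. replace d with (d - 1 + 1)%nat by lia. apply madd_In; auto. }
    intros x y.
    assert (H23 : Cadd (X2 x y) (X3 x y) =
      Cadd (Cmul (RtoC (Rr*Rr)) (sos_of [ind a'] x y)) (Copp (sos_of [ind a] x y))).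
    { unfold X2, X3. rewrite pmul_ind_sphere; auto. rewrite <- lsum_add.
      rewrite (lsum_two _ _ z e); auto; [| apply NoDup_mis |].
      - rewrite !dlt_val. assert (Ez : madd a' z = a') by (unfold z; rewrite <- Hl, <- He2; apply madd_zero_r).
        rewrite Ez, He1, !mi_eqb_refl. rewrite (mi_eqb_false e z) by auto. simpl.
        unfold sphere_poly. rewrite !mi_eqb_refl.
        rewrite (mi_eqb_false e (repeat 0%nat n)) by auto.
        rewrite He3, He4, Hl, Nat.eqb_refl. simpl.
        rewrite (mi_eqb_sym a' x), (mi_eqb_sym a' y), (mi_eqb_sym a x), (mi_eqb_sym a y).
        destruct (mi_eqb x a'), (mi_eqb y a'), (mi_eqb x a), (mi_eqb y a); simpl; csplit; ring.
      - intros w Hw Hwz Hwe. rewrite dlt_val. apply mis_char in Hw as [Hw1 Hw2].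
        assert (Hw3 : deg w = 1%nat).
        { destruct (deg w) eqn:E; [|lia]. apply deg0_repeat in E. rewrite Hw1 in E. contradiction. }
        rewrite (mi_eqb_false w z), (mi_eqb_false w e) by auto. simpl.
        unfold sphere_poly. rewrite mi_eqb_refl, (mi_eqb_false w (repeat 0%nat n)) by auto.
        rewrite Hw1, Hw3, Nat.eqb_refl. simpl.
        rewrite (mi_eqb_sym x), (mi_eqb_sym y).
        destruct (andb _ _); csplit; ring. }
    unfold padd. transitivity (Cadd (X1 x y) (Cadd (X2 x y) (X3 x y))). csplit; ring.
    rewrite H23. unfold X1, pscal. csplit; ring.
Qed.


Lemma D_ext n m d g kg x y t : (forall a b, x a b = y a b) -> Dset n m d g kg x t -> Dset n m d g kg y t.
Proof. intros H. apply Q_ext. intros a b. rewrite H; auto. Qed.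

Lemma D_add n m d g kg x y t s : Dset n m d g kg x t -> Dset n m d g kg y s ->
  Dset n m d g kg (padd x y) (t + s).
Proof.
  intros H1 H2. eapply Q_ext; [|apply (Q_add _ _ _ _ _ _ _ H1 H2)].
  intros a b. unfold padd. csplit; ring.
Qed.

Lemma D_scal n m d g kg x t s : 0 <= s -> Dset n m d g kg x t -> Dset n m d g kg (pscal s x) (s * t).
Proof.
  intros Hs H1. eapply Q_ext; [|apply (Q_scal _ _ _ _ _ _ _ Hs H1)].
  intros a b. unfold pscal. csplit; ring.
Qed.

Lemma D_sum {A : Type} n m d g kg (l : list A) (F : A -> cpoly) :
  (forall i, In i l -> exists t, Dset n m d g kg (F i) t) ->
  exists t, Dset n m d g kg (fun a b => lsum l (fun i => F i a b)) t.
Proof.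
  induction l as [|i l IH]; intros H.
  - exists 0. eapply Q_ext; [|apply Q_zero]. intros a b. unfold pzero. simpl. csplit; ring.
  - destruct (H i) as [t Ht]; [simpl; auto|]. destruct IH as [s Hs]; [intros; apply H; simpl; auto|].
    exists (t + s). eapply D_ext; [|apply (D_add _ _ _ _ _ _ _ _ _ Ht Hs)].
    intros a b. reflexivity.
Qed.

Definition kpair (a b : mi) (u : C) : cpoly := fun x y =>
  Cadd (if andb (mi_eqb x a) (mi_eqb y b) then u else C0)
       (if andb (mi_eqb x b) (mi_eqb y a) then Cconj u else C0).

Lemma OU_pair n m d g kg a b u : In a (mis n d) -> In b (mis n d) ->
  (exists t, Dset n m d g kg (sos_of [ind a]) t) -> (exists t, Dset n m d g kg (sos_of [ind b]) t) ->
  exists t, Dset n m d g kg (kpair a b u) t.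
Proof.
  intros Ha Hb [ta Hta] [tb Htb].
  set (s := re u * re u + im u * im u).
  assert (Hs : 0 <= s) by (unfold s; nra).
  set (p := fun x => Cadd (ind a x) (Cmul (Copp u) (ind b x))).
  assert (Hp : Qset n m d g kg (sos_of [p])).
  { apply Q_sos. intros q [<-|[]] x Hx. unfold p, ind.
    rewrite (mi_eqb_false x a), (mi_eqb_false x b) by (intro; subst; auto). csplit; ring. }
  exists (ta + s * tb).
  pose proof (D_add _ _ _ _ _ _ _ _ _ Hta (D_scal _ _ _ _ _ _ _ _ Hs Htb)) as H1.
  eapply Q_ext; [|apply (Q_add _ _ _ _ _ _ _ H1 Hp)].
  intros x y. unfold padd, pscal, kpair. rewrite !dlt_val. unfold sos_of. rewrite lsum_one.
  unfold p, ind. unfold s.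
  destruct (mi_eqb x a), (mi_eqb y a), (mi_eqb x b), (mi_eqb y b); simpl; csplit; ring.
Qed.

Lemma dsum1 (M : list mi) (F : mi -> mi -> C) p q : NoDup M ->
  lsum M (fun a => lsum M (fun b => if andb (mi_eqb p a) (mi_eqb q b) then F a b else C0)) =
  if andb (if in_dec (list_eq_dec Nat.eq_dec) p M then true else false)
          (if in_dec (list_eq_dec Nat.eq_dec) q M then true else false) then F p q else C0.
Proof.
  intros HM. destruct (in_dec (list_eq_dec Nat.eq_dec) p M) as [Hp|Hp].
  - rewrite (lsum_single _ _ p); auto.
    + rewrite mi_eqb_refl. simpl. destruct (in_dec (list_eq_dec Nat.eq_dec) q M) as [Hq|Hq].
      * rewrite (lsum_single _ _ q); auto. rewrite mi_eqb_refl; auto.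
        intros y _ Hy. rewrite mi_eqb_false; auto.
      * apply lsum_zero. intros y Hy. rewrite mi_eqb_false; auto. intro; subst; auto.
    + intros y _ Hy. apply lsum_zero; intros. rewrite mi_eqb_false; auto.
  - simpl. apply lsum_zero; intros y Hy. apply lsum_zero; intros. rewrite mi_eqb_false; auto.
    intro; subst; auto.
Qed.

Lemma OU n m d g kg x :
  (forall a, In a (mis n d) -> exists t, Dset n m d g kg (sos_of [ind a]) t) ->
  in_Rd n d x -> exists t, Dset n m d g kg x t.
Proof.
  intros HOU [Hh Hs].
  destruct (D_sum n m d g kg (mis n d) (fun a p q => lsum (mis n d) (fun b => kpair a b (Cmul (RtoC (/2)) (x a b)) p q))) as [t Ht].
  { intros a Ha. apply D_sum. intros b Hb. apply OU_pair; auto. }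
  exists t. eapply D_ext; [|exact Ht]. intros p q. unfold kpair.
  transitivity (Cadd
    (lsum (mis n d) (fun a => lsum (mis n d) (fun b =>
       if andb (mi_eqb p a) (mi_eqb q b) then Cmul (RtoC (/2)) (x a b) else C0)))
    (lsum (mis n d) (fun a => lsum (mis n d) (fun b =>
       if andb (mi_eqb q a) (mi_eqb p b) then Cconj (Cmul (RtoC (/2)) (x a b)) else C0)))).
  { rewrite <- lsum_add. apply lsum_ext; intros a _. rewrite <- lsum_add. apply lsum_ext; intros b _.
    rewrite (mi_eqb_sym p a), (mi_eqb_sym q b), (mi_eqb_sym p b), (mi_eqb_sym q a).
    rewrite (Bool.andb_comm (mi_eqb b p)). reflexivity. }
  rewrite !dsum1 by apply NoDup_mis.
  destruct (in_dec (list_eq_dec Nat.eq_dec) p (mis n d)) as [Hp|Hp];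
  destruct (in_dec (list_eq_dec Nat.eq_dec) q (mis n d)) as [Hq|Hq]; cbn [andb].
  - rewrite <- (Hh p q). csplit; field.
  - rewrite Hs by tauto. csplit; ring.
  - rewrite Hs by tauto. csplit; ring.
  - rewrite Hs by tauto. csplit; ring.
Qed.


Definition I := option (mi * mi * bool).
Definition I_eq_dec (i j : I) : {i = j} + {i <> j}.
Proof. decide equality. destruct a, p; destruct p0, p. decide equality; [apply Bool.bool_dec|].
  decide equality; apply (list_eq_dec Nat.eq_dec). Defined.

Definition upd (w : I -> R) (i0 : I) (v : R) : I -> R :=
  fun i => if I_eq_dec i i0 then v else w i.

Definition cpsum (dir : I -> cpoly) (l : list I) (al : I -> R) : cpoly :=
  fun a b => lsum l (fun i => Cmul (RtoC (al i)) (dir i a b)).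

Definition Inv n m d g kg (dir : I -> cpoly) (l : list I) (w : I -> R) : Prop :=
  forall al t, Dset n m d g kg (cpsum dir l al) t -> rsum l (fun i => al i * w i) <= t.

Lemma in_Rd_padd n d x y : in_Rd n d x -> in_Rd n d y -> in_Rd n d (padd x y).
Proof.
  intros [H1 H2] [H3 H4]. split; intros a b; unfold padd.
  - rewrite <- H1, <- H3. csplit; ring.
  - intros H. rewrite H2, H4; auto. csplit; ring.
Qed.
Lemma in_Rd_pscal n d s x : in_Rd n d x -> in_Rd n d (pscal s x).
Proof.
  intros [H1 H2]. split; intros a b; unfold pscal.
  - rewrite <- H1. csplit; ring.
  - intros H. rewrite H2; auto. csplit; ring.
Qed.
Lemma in_Rd_zero n d : in_Rd n d pzero.
Proof. split; intros; unfold pzero; auto. csplit; ring. Qed.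
Lemma in_Rd_cpsum n d dir l al : (forall i, In i l -> in_Rd n d (dir i)) -> in_Rd n d (cpsum dir l al).
Proof.
  induction l as [|i l IH]; intros H.
  - apply in_Rd_zero.
  - apply (in_Rd_padd n d (pscal (al i) (dir i)) (cpsum dir l al)).
    apply in_Rd_pscal; apply H; simpl; auto. apply IH; intros; apply H; simpl; auto.
Qed.

Lemma cpsum_scal dir l c al a b : cpsum dir l (fun i => c * al i) a b = Cmul (RtoC c) (cpsum dir l al a b).
Proof. unfold cpsum. rewrite <- lsum_mul_l. apply lsum_ext; intros. csplit; ring. Qed.
Lemma cpsum_add dir l al be a b : cpsum dir l (fun i => al i + be i) a b = Cadd (cpsum dir l al a b) (cpsum dir l be a b).
Proof. unfold cpsum. rewrite <- lsum_add. apply lsum_ext; intros. csplit; ring. Qed.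

Lemma HB_step n m d g kg dir l w i0 :
  (forall x, in_Rd n d x -> exists t, Dset n m d g kg x t) ->
  (forall i, In i (i0 :: l) -> in_Rd n d (dir i)) ->
  Inv n m d g kg dir l w -> ~ In i0 l ->
  exists v, Inv n m d g kg dir (i0 :: l) (upd w i0 v) /\
    (forall M, (forall al t, Dset n m d g kg (fun a b => Csub (cpsum dir l al a b) (dir i0 a b)) t ->
                 rsum l (fun i => al i * w i) - t <= M) -> v <= M).
Proof.
  intros HOU Hdir Hinv Hi0.
  set (A := fun r => exists al t, Dset n m d g kg (fun a b => Csub (cpsum dir l al a b) (dir i0 a b)) t /\
                      r = rsum l (fun i => al i * w i) - t).
  assert (HAB : forall al t be s,
     Dset n m d g kg (fun a b => Csub (cpsum dir l al a b) (dir i0 a b)) t ->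
     Dset n m d g kg (fun a b => Cadd (cpsum dir l be a b) (dir i0 a b)) s ->
     rsum l (fun i => al i * w i) - t <= s - rsum l (fun i => be i * w i)).
  { intros al t be s H1 H2. pose proof (D_add _ _ _ _ _ _ _ _ _ H1 H2) as H3.
    assert (H4 : Dset n m d g kg (cpsum dir l (fun i => al i + be i)) (t + s)).
    { eapply D_ext; [|exact H3]. intros a b. unfold padd. rewrite cpsum_add. csplit; ring. }
    apply Hinv in H4. rewrite <- (rsum_ext _ (fun i => al i * w i + be i * w i)) in H4 by (intros; ring).
    rewrite rsum_add in H4. lra. }
  assert (Hin : forall x, In x l -> in_Rd n d (dir x)) by (intros; apply Hdir; simpl; auto).
  assert (Hd0 : in_Rd n d (dir i0)) by (apply Hdir; simpl; auto).
  assert (HA : exists r, A r).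
  { destruct (HOU (padd (cpsum dir l (fun _ => 0)) (pscal (-1) (dir i0)))) as [t Ht].
    apply in_Rd_padd. apply in_Rd_cpsum; auto. apply in_Rd_pscal; auto.
    exists (rsum l (fun i => 0 * w i) - t), (fun _ => 0), t. split; auto.
    eapply D_ext; [|exact Ht]. intros a b. unfold padd, pscal. csplit; ring. }
  destruct (HOU (padd (cpsum dir l (fun _ => 0)) (dir i0))) as [s0 Hs0].
  { apply in_Rd_padd; auto. apply in_Rd_cpsum; auto. }
  assert (HB : bound A).
  { exists (s0 - rsum l (fun i => 0 * w i)). intros r [al [t [Ht ->]]]. apply (HAB al t (fun _ => 0) s0); auto. }
  destruct (completeness A HB HA) as [v [Hv1 Hv2]].
  exists v. split.
  - intros be t Ht. simpl rsum. unfold upd at 1. destruct (I_eq_dec i0 i0) as [_|]; [|congruence].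
    rewrite (rsum_ext l (fun i => be i * upd w i0 v i) (fun i => be i * w i)).
    2:{ intros i Hi. unfold upd. destruct (I_eq_dec i i0); auto. subst; contradiction. }
    assert (Hsplit : forall a b, cpsum dir (i0 :: l) be a b = Cadd (Cmul (RtoC (be i0)) (dir i0 a b)) (cpsum dir l be a b)).
    { intros; reflexivity. }
    destruct (Rtotal_order (be i0) 0) as [Hneg|[Hz|Hpos]].
    + set (c := / (- be i0)).
      assert (Hc : 0 <= c) by (unfold c; left; apply Rinv_0_lt_compat; lra).
      pose proof (D_scal _ _ _ _ _ _ _ _ Hc Ht) as H1.
      assert (A (rsum l (fun i => (c * be i) * w i) - c * t)).
      { exists (fun i => c * be i), (c * t). split; auto. eapply D_ext; [|exact H1].
        intros a b. unfold pscal. rewrite Hsplit, cpsum_scal. unfold c. csplit; field; lra. }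
      apply Hv1 in H.
      rewrite (rsum_ext _ _ (fun i => c * (be i * w i))) in H by (intros; ring).
      rewrite rsum_mul_l in H. unfold c in H.
      apply (Rmult_le_compat_l (- be i0)) in H; [|lra].
      replace (- be i0 * (/ - be i0 * rsum l (fun i => be i * w i) - / - be i0 * t)) with
        (rsum l (fun i => be i * w i) - t) in H by (field; lra). lra.
    + rewrite Hz. assert (Dset n m d g kg (cpsum dir l be) t).
      { eapply D_ext; [|exact Ht]. intros a b. rewrite Hsplit, Hz. csplit; ring. }
      apply Hinv in H. lra.
    + set (c := / be i0).
      assert (Hc : 0 <= c) by (unfold c; left; apply Rinv_0_lt_compat; lra).
      pose proof (D_scal _ _ _ _ _ _ _ _ Hc Ht) as H1.
      assert (Hle : v <= c * t - rsum l (fun i => (c * be i) * w i)).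
      { apply Hv2. intros r [al [t' [Ht' ->]]]. apply (HAB al t' (fun i => c * be i) (c * t)); auto.
        eapply D_ext; [|exact H1]. intros a b. unfold pscal. rewrite Hsplit, cpsum_scal. unfold c.
        csplit; field; lra. }
      rewrite (rsum_ext _ _ (fun i => c * (be i * w i))) in Hle by (intros; ring).
      rewrite rsum_mul_l in Hle. unfold c in Hle.
      apply (Rmult_le_compat_l (be i0)) in Hle; [|lra].
      replace (be i0 * (/ be i0 * t - / be i0 * rsum l (fun i => be i * w i))) with
        (t - rsum l (fun i => be i * w i)) in Hle by (field; lra). lra.
  - intros M HM. apply Hv2. intros r [al [t [Ht ->]]]. apply HM; auto.
Qed.


Lemma HB_list n m d g kg dir l0 w :
  (forall x, in_Rd n d x -> exists t, Dset n m d g kg x t) ->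
  Inv n m d g kg dir l0 w -> forall l1, NoDup (l1 ++ l0) ->
  (forall i, In i (l1 ++ l0) -> in_Rd n d (dir i)) ->
  exists w', Inv n m d g kg dir (l1 ++ l0) w' /\ forall i, In i l0 -> w' i = w i.
Proof.
  intros HOU Hinv l1. induction l1 as [|i0 l1 IH]; simpl; intros Hnd Hdir.
  - exists w; split; auto.
  - inversion Hnd as [|? ? Hni Hnd']; subst. destruct IH as [w1 [Hw1 Hw2]]. exact Hnd'. intros i Hi; apply Hdir; simpl; auto.
    destruct (HB_step n m d g kg dir (l1 ++ l0) w1 i0) as [v [Hv _]]; auto.
    exists (upd w1 i0 v). split; auto. intros i Hi. unfold upd.
    destruct (I_eq_dec i i0); subst. exfalso; apply Hni; apply in_or_app; auto. auto.
Qed.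

Lemma Inv_nil n m d g kg dir w : (forall t, Dset n m d g kg pzero t -> 0 <= t) -> Inv n m d g kg dir [] w.
Proof. intros H al t Ht. simpl. apply H. eapply D_ext; [|exact Ht]. intros; reflexivity. Qed.

Definition indR (x a : mi) : R := if mi_eqb x a then 1 else 0.
Definition H1c (a b : mi) : cpoly := fun x y => RtoC ((indR x a * indR y b + indR x b * indR y a) / 2).
Definition H2c (a b : mi) : cpoly := fun x y => mkC 0 ((indR x a * indR y b - indR x b * indR y a) / 2).
Definition dirc (c : cpoly) (i : I) : cpoly :=
  match i with None => c | Some (a, b, true) => H1c a b | Some (a, b, false) => H2c a b end.
Definition pidx (M : list mi) : list I :=
  flat_map (fun a => flat_map (fun b => [Some (a, b, true); Some (a, b, false)]) M) M.
Definition coef (x : cpoly) (i : I) : R :=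
  match i with None => 0 | Some (a, b, true) => re (x a b) | Some (a, b, false) => im (x a b) end.
Definition inb (a : mi) (M : list mi) : bool := if in_dec (list_eq_dec Nat.eq_dec) a M then true else false.

Lemma rdsum (M : list mi) (F : mi -> mi -> R) p q : NoDup M ->
  rsum M (fun a => rsum M (fun b => indR p a * indR q b * F a b)) =
  if andb (inb p M) (inb q M) then F p q else 0.
Proof.
  intros HM. unfold inb, indR. destruct (in_dec (list_eq_dec Nat.eq_dec) p M) as [Hp|Hp].
  - rewrite (rsum_single _ _ p); auto.
    + rewrite mi_eqb_refl. simpl. destruct (in_dec (list_eq_dec Nat.eq_dec) q M) as [Hq|Hq].
      * rewrite (rsum_single _ _ q); auto. rewrite mi_eqb_refl; ring.
        intros y _ Hy. rewrite mi_eqb_false; auto. ring.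
      * apply rsum_zero. intros y Hy. rewrite mi_eqb_false. ring. intro; subst; auto.
    + intros y _ Hy. apply rsum_zero; intros. rewrite mi_eqb_false; auto. ring.
  - simpl. apply rsum_zero; intros y Hy. apply rsum_zero; intros. rewrite mi_eqb_false. ring.
    intro; subst; auto.
Qed.

Lemma decomp n d c x p q : in_Rd n d x ->
  cpsum (dirc c) (pidx (mis n d) ++ [None]) (coef x) p q = x p q.
Proof.
  intros [Hh Hs]. set (M := mis n d).
  assert (HM : NoDup M) by apply NoDup_mis.
  apply C_ext.
  - unfold cpsum. rewrite re_lsum, rsum_app. unfold pidx. rewrite rsum_flat_map.
    rewrite (rsum_ext M _ (fun a => rsum M (fun b =>
       /2 * (indR p a * indR q b * re (x a b)) + /2 * (indR q a * indR p b * re (x a b))))).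
    2:{ intros a _. rewrite rsum_flat_map. apply rsum_ext. intros b _. simpl. unfold H1c, H2c. simpl. field. }
    rewrite (rsum_ext M _ (fun a => /2 * rsum M (fun b => indR p a * indR q b * re (x a b)) +
                                    /2 * rsum M (fun b => indR q a * indR p b * re (x a b)))).
    2:{ intros a _. rewrite rsum_add, !rsum_mul_l. auto. }
    rewrite rsum_add, !rsum_mul_l, !rdsum by auto. simpl.
    unfold inb. destruct (in_dec (list_eq_dec Nat.eq_dec) p M) as [Hp|Hp];
    destruct (in_dec (list_eq_dec Nat.eq_dec) q M) as [Hq|Hq]; simpl.
    + rewrite <- (Hh p q). simpl. field.
    + rewrite Hs by tauto. simpl. field.
    + rewrite Hs by tauto. simpl. field.
    + rewrite Hs by tauto. simpl. field.
  - unfold cpsum. rewrite im_lsum, rsum_app. unfold pidx. rewrite rsum_flat_map.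
    rewrite (rsum_ext M _ (fun a => rsum M (fun b =>
       /2 * (indR p a * indR q b * im (x a b)) + - /2 * (indR q a * indR p b * im (x a b))))).
    2:{ intros a _. rewrite rsum_flat_map. apply rsum_ext. intros b _. simpl. unfold H1c, H2c. simpl. field. }
    rewrite (rsum_ext M _ (fun a => /2 * rsum M (fun b => indR p a * indR q b * im (x a b)) +
                                    - /2 * rsum M (fun b => indR q a * indR p b * im (x a b)))).
    2:{ intros a _. rewrite rsum_add, !rsum_mul_l. auto. }
    rewrite rsum_add, !rsum_mul_l, !rdsum by auto. simpl.
    unfold inb. destruct (in_dec (list_eq_dec Nat.eq_dec) p M) as [Hp|Hp];
    destruct (in_dec (list_eq_dec Nat.eq_dec) q M) as [Hq|Hq]; simpl.
    + rewrite <- (Hh p q). simpl. field.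
    + rewrite Hs by tauto. simpl. field.
    + rewrite Hs by tauto. simpl. field.
    + rewrite Hs by tauto. simpl. field.
Qed.


Lemma LQ n d k phi y p : (k <= d)%nat -> hdeg_le n (d - k) p ->
  Ly n d (pmul n (sos_of [p]) (d - k) phi k) y =
  re (lsum (mis n (d - k)) (fun a => lsum (mis n (d - k)) (fun b =>
        Cmul (Cconj (p a)) (Cmul (locmat n (d - k) k phi y a b) (p b))))).
Proof.
  intros Hk Hp. unfold Ly. f_equal.
  set (M := mis n d). set (N := mis n (d - k)). set (K := mis n k).
  set (T := fun a b G H e t => if andb (mi_eqb (madd G e) a) (mi_eqb (madd H t) b)
                 then Cmul (Cmul (sos_of [p] G H) (phi e t)) (y a b) else C0).
  transitivity (lsum M (fun a => lsum M (fun b => lsum N (fun G => lsum N (fun H =>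
                  lsum K (fun e => lsum K (fun t => T a b G H e t))))))).
  { apply lsum_ext; intros a _; apply lsum_ext; intros b _. unfold pmul.
    rewrite <- lsum_mul_r. apply lsum_ext; intros G _.
    rewrite <- lsum_mul_r. apply lsum_ext; intros H _.
    rewrite <- lsum_mul_r. apply lsum_ext; intros e _.
    rewrite <- lsum_mul_r. apply lsum_ext; intros t _.
    unfold T. destruct (andb _ _); auto. csplit; ring. }
  transitivity (lsum M (fun a => lsum N (fun G => lsum N (fun H =>
                  lsum K (fun e => lsum K (fun t => lsum M (fun b => T a b G H e t))))))).
  { apply lsum_ext; intros a _. rewrite lsum_swap. apply lsum_ext; intros G _.
    rewrite lsum_swap. apply lsum_ext; intros H _. rewrite lsum_swap. apply lsum_ext; intros e _.
    rewrite lsum_swap. reflexivity. }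
  transitivity (lsum N (fun G => lsum N (fun H =>
                  lsum K (fun e => lsum K (fun t => lsum M (fun a => lsum M (fun b => T a b G H e t))))))).
  { rewrite lsum_swap. apply lsum_ext; intros G _.
    rewrite lsum_swap. apply lsum_ext; intros H _. rewrite lsum_swap. apply lsum_ext; intros e _.
    rewrite lsum_swap. reflexivity. }
  apply lsum_ext; intros G HG. apply lsum_ext; intros H HH.
  unfold locmat. fold K.
  rewrite <- lsum_mul_r, <- lsum_mul_l. apply lsum_ext; intros e He.
  rewrite <- lsum_mul_r, <- lsum_mul_l. apply lsum_ext; intros t Ht.
  unfold T. rewrite dsum1 by apply NoDup_mis.
  assert (HGe : In (madd G e) M).
  { unfold M. replace d with (d - k + k)%nat by lia. apply madd_In; auto. }
  assert (HHt : In (madd H t) M).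
  { unfold M. replace d with (d - k + k)%nat by lia. apply madd_In; auto. }
  destruct (in_dec (list_eq_dec Nat.eq_dec) (madd G e) M); [|contradiction].
  destruct (in_dec (list_eq_dec Nat.eq_dec) (madd H t) M); [|contradiction]. simpl.
  unfold sos_of, lsum. simpl. csplit; ring.
Qed.


Definition herm (phi : cpoly) : Prop := forall a b, Cconj (phi a b) = phi b a.

Lemma Cconj_mul a b : Cconj (Cmul a b) = Cmul (Cconj a) (Cconj b).
Proof. csplit; ring. Qed.
Lemma Cconj_invol a : Cconj (Cconj a) = a.
Proof. csplit; ring. Qed.

Lemma sos_herm l : herm (sos_of l).
Proof.
  intros a b. unfold sos_of. rewrite lsum_conj. apply lsum_ext; intros. csplit; ring.
Qed.

Lemma one_herm n : herm (one_poly n).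
Proof. intros a b. unfold one_poly. rewrite Bool.andb_comm. destruct (andb _ _); csplit; ring. Qed.

Lemma one_in_Rd n d : in_Rd n d (one_poly n).
Proof.
  split. apply one_herm. intros a b H. unfold one_poly.
  destruct (mi_eqb a (repeat 0%nat n)) eqn:E1, (mi_eqb b (repeat 0%nat n)) eqn:E2; simpl; auto.
  apply mi_eqb_true in E1, E2. subst. exfalso; apply H; split; apply repeat_In.
Qed.

Lemma pmul_herm n phi da psi db : herm phi -> herm psi -> herm (pmul n phi da psi db).
Proof.
  intros H1 H2 a b. unfold pmul. rewrite lsum_swap.
  rewrite lsum_conj. apply lsum_ext; intros G _. rewrite lsum_conj. apply lsum_ext; intros H _.
  rewrite lsum_conj, lsum_swap. apply lsum_ext; intros e _. rewrite lsum_conj. apply lsum_ext; intros t _.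
  rewrite Bool.andb_comm. destruct (andb _ _).
  - rewrite Cconj_mul, H1, H2; auto.
  - csplit; ring.
Qed.

Lemma pmul_supp n d k phi psi : (k <= d)%nat ->
  forall a b, ~ (In a (mis n d) /\ In b (mis n d)) -> pmul n phi (d - k) psi k a b = C0.
Proof.
  intros Hk a b Hn. unfold pmul. apply lsum_zero; intros G HG. apply lsum_zero; intros H HH.
  apply lsum_zero; intros e He. apply lsum_zero; intros t Ht.
  destruct (mi_eqb (madd G e) a) eqn:E1, (mi_eqb (madd H t) b) eqn:E2; simpl; auto.
  apply mi_eqb_true in E1, E2. exfalso. apply Hn. subst. split.
  all: replace d with (d - k + k)%nat by lia; apply madd_In; auto.
Qed.

Lemma in_Rd_lsum {A : Type} n d (l : list A) (F : A -> cpoly) :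
  (forall i, In i l -> in_Rd n d (F i)) -> in_Rd n d (fun a b => lsum l (fun i => F i a b)).
Proof.
  induction l as [|i l IH]; intros H.
  - apply in_Rd_zero.
  - apply (in_Rd_padd n d (F i) (fun a b => lsum l (fun i => F i a b))).
    apply H; simpl; auto. apply IH; intros; apply H; simpl; auto.
Qed.

Lemma dmin_k m k kg : (k <= dmin m k kg)%nat.
Proof. unfold dmin. induction (map kg (seq 1 m)); simpl; lia. Qed.
Lemma dmin_kg m k kg i : (1 <= i <= m)%nat -> (kg i <= dmin m k kg)%nat.
Proof.
  intros Hi. unfold dmin. assert (In (kg i) (map kg (seq 1 m))) by (apply in_map, in_seq; lia).
  induction (map kg (seq 1 m)); simpl in *. contradiction. destruct H; subst; [lia|]. apply IHl in H; lia.
Qed.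

Definition ghyp n m d (g : nat -> cpoly) (kg : nat -> nat) : Prop :=
  forall i, (i <= m)%nat -> herm (gfull n g i) /\ (kfull kg i <= d)%nat.

Lemma Q_in_Rd n m d g kg x : ghyp n m d g kg -> Qset n m d g kg x -> in_Rd n d x.
Proof.
  intros Hg [ps [H1 H2]].
  assert (in_Rd n d (fun a b => lsum (seq 0 (S m)) (fun i =>
      pmul n (sos_of (ps i)) (d - kfull kg i) (gfull n g i) (kfull kg i) a b))).
  { apply in_Rd_lsum. intros i Hi. apply in_seq in Hi. destruct (Hg i) as [Hh Hk]; [lia|].
    split. apply pmul_herm; auto. apply sos_herm. apply pmul_supp; auto. }
  destruct H as [Ha Hb]. split; intros a b; rewrite !H2; auto.
Qed.

Lemma Ly_lsum {A : Type} n d (l : list A) (F : A -> cpoly) y :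
  Ly n d (fun a b => lsum l (fun i => F i a b)) y = rsum l (fun i => Ly n d (F i) y).
Proof.
  unfold Ly. rewrite <- re_lsum. f_equal.
  transitivity (lsum (mis n d) (fun a => lsum (mis n d) (fun b => lsum l (fun i => Cmul (F i a b) (y a b))))).
  { apply lsum_ext; intros; apply lsum_ext; intros. rewrite lsum_mul_r. auto. }
  transitivity (lsum (mis n d) (fun a => lsum l (fun i => lsum (mis n d) (fun b => Cmul (F i a b) (y a b))))).
  { apply lsum_ext; intros. apply lsum_swap. }
  apply lsum_swap.
Qed.
Lemma Ly_ext n d x x' y : (forall a b, x a b = x' a b) -> Ly n d x y = Ly n d x' y.
Proof. intros H. unfold Ly. f_equal. apply lsum_ext; intros; apply lsum_ext; intros. rewrite H; auto. Qed.

Lemma pmul_sos_list n l da psi db a b :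
  pmul n (sos_of l) da psi db a b = lsum l (fun p => pmul n (sos_of [p]) da psi db a b).
Proof.
  induction l as [|p l IH].
  - apply pmul_zero1; auto.
  - change (lsum (p :: l) ?F) with (Cadd (F p) (lsum l F)).
    rewrite <- IH. rewrite <- pmul_add1.
    rewrite (pmul_ext n (sos_of (p :: l)) (fun a b => Cadd (sos_of [p] a b) (sos_of l a b))); auto.
    intros x y. unfold sos_of. change (lsum (p :: l) ?F) with (Cadd (F p) (lsum l F)).
    change (lsum [p] ?F) with (Cadd (F p) (lsum [] F)). simpl. csplit; ring.
Qed.

Lemma rsum_nonneg {A : Type} (l : list A) F : (forall x, In x l -> 0 <= F x) -> 0 <= rsum l F.
Proof. induction l; simpl; intros H. lra. assert (0 <= F a) by auto. assert (0 <= rsum l F) by auto. lra. Qed.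

Lemma weak_dual n m d g kg y x : ghyp n m d g kg ->
  (forall i, (i <= m)%nat -> psd n (d - kfull kg i) (locmat n (d - kfull kg i) (kfull kg i) (gfull n g i) y)) ->
  Qset n m d g kg x -> 0 <= Ly n d x y.
Proof.
  intros Hg Hpsd [ps [H1 H2]]. rewrite (Ly_ext _ _ _ _ _ H2). rewrite Ly_lsum.
  apply rsum_nonneg. intros i Hi. apply in_seq in Hi.
  rewrite (Ly_ext _ _ _ _ _ (pmul_sos_list n (ps i) _ _ _)). rewrite Ly_lsum.
  apply rsum_nonneg. intros p Hp. destruct (Hg i) as [_ Hk]; [lia|].
  rewrite LQ; auto. apply Hpsd; lia. apply H1; auto; lia.
Qed.


Definition ymk n d (w : I -> R) : cpoly := fun a b =>
  if andb (inb a (mis n d)) (inb b (mis n d)) then mkC (w (Some (a, b, true))) (- w (Some (a, b, false))) else C0.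

Lemma inb_true a M : In a M -> inb a M = true.
Proof. unfold inb. destruct (in_dec (list_eq_dec Nat.eq_dec) a M); auto; contradiction. Qed.
Lemma inb_false a M : ~ In a M -> inb a M = false.
Proof. unfold inb. destruct (in_dec (list_eq_dec Nat.eq_dec) a M); auto; contradiction. Qed.

Definition Lidx n d : list I := pidx (mis n d) ++ [None].

Lemma In_pidx a b bo M : In a M -> In b M -> In (Some (a, b, bo)) (pidx M).
Proof.
  intros Ha Hb. unfold pidx. apply in_flat_map. exists a; split; auto.
  apply in_flat_map. exists b; split; auto. destruct bo; simpl; auto.
Qed.
Lemma In_pidx_inv i M : In i (pidx M) -> exists a b bo, i = Some (a, b, bo) /\ In a M /\ In b M.
Proof.
  unfold pidx. intros H. apply in_flat_map in H as [a [Ha H]]. apply in_flat_map in H as [b [Hb H]].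
  destruct H as [<-|[<-|[]]]; eauto 7.
Qed.

Lemma NoDup_L n d : NoDup (Lidx n d).
Proof.
  unfold Lidx. apply NoDup_app.
  - unfold pidx. apply NoDup_flat_map'. apply NoDup_mis.
    + intros a _. apply NoDup_flat_map'. apply NoDup_mis.
      * intros b _. repeat constructor; simpl; try tauto. intros [H|[]]; discriminate.
      * intros b b' z _ _ Hbb H1 H2. destruct H1 as [<-|[<-|[]]]; destruct H2 as [H2|[H2|[]]]; inversion H2; auto.
    + intros a a' z _ _ Haa H1 H2. apply in_flat_map in H1 as [b [_ H1]]. apply in_flat_map in H2 as [b' [_ H2]].
      destruct H1 as [<-|[<-|[]]]; destruct H2 as [H2|[H2|[]]]; inversion H2; auto.
  - repeat constructor; auto.
  - intros i Hi [<-|[]]. apply In_pidx_inv in Hi as [a [b [bo [H _]]]]. discriminate.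
Qed.

Lemma dir_in_Rd n d c i : in_Rd n d c -> In i (Lidx n d) -> in_Rd n d (dirc c i).
Proof.
  intros Hc Hi. unfold Lidx in Hi. apply in_app_or in Hi as [Hi|[<-|[]]]; [|auto].
  apply In_pidx_inv in Hi as [a [b [bo [-> [Ha Hb]]]]].
  assert (Hz : forall x, ~ In x (mis n d) -> indR x a = 0 /\ indR x b = 0).
  { intros x Hx. unfold indR. rewrite !mi_eqb_false; auto; intro; subst; auto. }
  destruct bo; simpl; split.
  - intros x y. unfold H1c. csplit; field.
  - intros x y Hn. unfold H1c. destruct (classic (In x (mis n d))).
    + assert (~ In y (mis n d)) by tauto. destruct (Hz y H0) as [-> ->]. csplit; field.
    + destruct (Hz x H) as [-> ->]. csplit; field.
  - intros x y. unfold H2c. csplit; field.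
  - intros x y Hn. unfold H2c. destruct (classic (In x (mis n d))).
    + assert (~ In y (mis n d)) by tauto. destruct (Hz y H0) as [-> ->]. csplit; field.
    + destruct (Hz x H) as [-> ->]. csplit; field.
Qed.

Definition ei (i : I) : I -> R := fun j => if I_eq_dec j i then 1 else 0.

Lemma cpsum_e dir l i p q : NoDup l -> In i l -> cpsum dir l (ei i) p q = dir i p q.
Proof.
  intros Hnd Hi. unfold cpsum. rewrite (lsum_single _ _ i); auto.
  unfold ei. destruct (I_eq_dec i i); [|congruence]. csplit; ring.
  intros j _ Hj. unfold ei. destruct (I_eq_dec j i); [congruence|]. csplit; ring.
Qed.
Lemma rsum_e l i (w : I -> R) : NoDup l -> In i l -> rsum l (fun j => ei i j * w j) = w i.
Proof.
  intros Hnd Hi. rewrite (rsum_single _ _ i); auto.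
  unfold ei. destruct (I_eq_dec i i); [|congruence]. ring.
  intros j _ Hj. unfold ei. destruct (I_eq_dec j i); [congruence|]. ring.
Qed.

Lemma Inv_cmp n m d g kg dir l w al be :
  Inv n m d g kg dir l w -> (forall p q, cpsum dir l al p q = cpsum dir l be p q) ->
  rsum l (fun i => al i * w i) <= rsum l (fun i => be i * w i).
Proof.
  intros Hinv H. assert (Dset n m d g kg (cpsum dir l (fun i => al i + (-1) * be i)) 0).
  { eapply Q_ext; [|apply Q_zero]. intros a b. unfold pzero. rewrite cpsum_add, cpsum_scal, H.
    csplit; ring. }
  apply Hinv in H0. rewrite (rsum_ext _ _ (fun i => al i * w i + (-1) * (be i * w i))) in H0 by (intros; ring).
  rewrite rsum_add, rsum_mul_l in H0. lra.
Qed.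

Lemma Ly_ymk n d x w : in_Rd n d x -> Ly n d x (ymk n d w) = rsum (Lidx n d) (fun i => coef x i * w i).
Proof.
  intros Hx. unfold Ly, Lidx. rewrite re_lsum, rsum_app.
  change (rsum [None] ?F) with (F None + 0). cbv beta. simpl coef. rewrite Rmult_0_l, !Rplus_0_r.
  unfold pidx. rewrite rsum_flat_map.
  apply rsum_ext; intros a Ha. rewrite re_lsum, rsum_flat_map. apply rsum_ext; intros b Hb.
  simpl. unfold ymk. rewrite !inb_true by auto. simpl. ring.
Qed.


Lemma Inv_eq n m d g kg dir l w al be :
  Inv n m d g kg dir l w -> (forall p q, cpsum dir l al p q = cpsum dir l be p q) ->
  rsum l (fun i => al i * w i) = rsum l (fun i => be i * w i).
Proof. intros H1 H2. apply Rle_antisym; apply (Inv_cmp n m d g kg dir l w); auto. Qed.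

Lemma ell_facts n m d g kg c w : ghyp n m d g kg -> in_Rd n d c ->
  Inv n m d g kg (dirc c) (Lidx n d) w ->
  (forall q, Qset n m d g kg q -> 0 <= Ly n d q (ymk n d w)) /\
  Ly n d (one_poly n) (ymk n d w) = 1 /\
  Ly n d c (ymk n d w) <= w None /\ herm (ymk n d w).
Proof.
  intros Hg Hc Hinv. pose proof (NoDup_L n d) as Hnd. split; [|split; [|split]].
  - intros q Hq. pose proof (Q_in_Rd _ _ _ _ _ _ Hg Hq) as Hqr. rewrite Ly_ymk by auto.
    assert (Dset n m d g kg (cpsum (dirc c) (Lidx n d) (fun i => (-1) * coef q i)) 0).
    { eapply Q_ext; [|exact Hq]. intros a b. rewrite cpsum_scal. unfold Lidx. rewrite decomp; auto.
      csplit; ring. }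
    apply Hinv in H. rewrite (rsum_ext _ _ (fun i => (-1) * (coef q i * w i))) in H by (intros; ring).
    rewrite rsum_mul_l in H. lra.
  - rewrite Ly_ymk by apply one_in_Rd. apply Rle_antisym.
    + apply Hinv. eapply Q_ext; [|apply Q_zero]. intros a b. unfold pzero. unfold Lidx.
      rewrite decomp by apply one_in_Rd. csplit; ring.
    + assert (Dset n m d g kg (cpsum (dirc c) (Lidx n d) (fun i => (-1) * coef (one_poly n) i)) (-1)).
      { eapply Q_ext; [|apply Q_zero]. intros a b. unfold pzero. rewrite cpsum_scal. unfold Lidx.
        rewrite decomp by apply one_in_Rd. csplit; ring. }
      apply Hinv in H. rewrite (rsum_ext _ _ (fun i => (-1) * (coef (one_poly n) i * w i))) in H by (intros; ring).
      rewrite rsum_mul_l in H. lra.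
  - rewrite Ly_ymk by auto. rewrite <- (rsum_e (Lidx n d) None w); auto.
    apply (Inv_cmp n m d g kg (dirc c)); auto. intros p q. unfold Lidx at 1. rewrite decomp; auto.
    rewrite cpsum_e; auto. all: unfold Lidx; apply in_or_app; simpl; auto.
  - intros a b. unfold ymk.
    destruct (inb a (mis n d)) eqn:Ea, (inb b (mis n d)) eqn:Eb; simpl; try (csplit; ring).
    assert (Ha : In a (mis n d)) by (unfold inb in Ea; destruct in_dec; auto; discriminate).
    assert (Hb : In b (mis n d)) by (unfold inb in Eb; destruct in_dec; auto; discriminate).
    assert (Hi : forall a b bo, In a (mis n d) -> In b (mis n d) -> In (Some (a, b, bo)) (Lidx n d)).
    { intros. unfold Lidx. apply in_or_app; left. apply In_pidx; auto. }
    assert (E1 : w (Some (b, a, true)) = w (Some (a, b, true))).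
    { rewrite <- (rsum_e (Lidx n d) (Some (b, a, true)) w), <- (rsum_e (Lidx n d) (Some (a, b, true)) w); auto.
      apply (Inv_eq n m d g kg (dirc c)); auto. intros p q. rewrite !cpsum_e; auto. simpl. unfold H1c.
      csplit; field. }
    assert (E2 : w (Some (b, a, false)) = - w (Some (a, b, false))).
    { rewrite <- (rsum_e (Lidx n d) (Some (b, a, false)) w) by auto.
      rewrite (Inv_eq n m d g kg (dirc c) _ w _ (fun j => (-1) * ei (Some (a, b, false)) j)); auto.
      rewrite (rsum_ext _ _ (fun j => (-1) * (ei (Some (a, b, false)) j * w j))) by (intros; ring).
      rewrite rsum_mul_l, rsum_e; auto. ring.
      intros p q. rewrite cpsum_scal, !cpsum_e; auto. simpl. unfold H2c. csplit; field. }
    csplit; rewrite ?E1, ?E2; ring.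
Qed.


Lemma sphere_kg n K Rr : (1 <= n)%nat -> has_deg n K (sphere_poly n Rr) -> K = 1%nat.
Proof.
  intros Hn [[_ Hs] [a [b [Ha [Hb [Hda Hne]]]]]].
  assert (HK : K = 0%nat \/ K = 1%nat).
  { unfold sphere_poly in Hne. destruct (mi_eqb a b); [|contradiction].
    destruct (mi_eqb a (repeat 0%nat n)) eqn:E1.
    - apply mi_eqb_true in E1. rewrite E1, deg_repeat0 in Hda. auto.
    - destruct (Nat.eqb (length a) n && Nat.eqb (deg a) 1)%bool eqn:E2; [|contradiction].
      apply Bool.andb_true_iff in E2. destruct E2 as [_ E2]. apply Nat.eqb_eq in E2. lia. }
  destruct HK as [ -> | -> ]; auto. exfalso.
  set (u := 1%nat :: repeat 0%nat (n - 1)).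
  assert (Hu1 : length u = n) by (unfold u; simpl; rewrite repeat_length; lia).
  assert (Hu2 : deg u = 1%nat) by (unfold u; rewrite deg_cons, deg_repeat0; auto).
  assert (Hsu : sphere_poly n Rr u u = C0).
  { apply Hs. intros [H _]. apply mis_char in H. lia. }
  unfold sphere_poly in Hsu. rewrite mi_eqb_refl in Hsu.
  rewrite mi_eqb_false in Hsu.
  2:{ intro E. rewrite E, deg_repeat0 in Hu2. lia. }
  rewrite Hu1, Hu2, !Nat.eqb_refl in Hsu. simpl in Hsu.
  injection Hsu. lra.
Qed.

Lemma Q_one n m d g kg : Qset n m d g kg (one_poly n).
Proof.
  eapply Q_ext; [|apply (Q_sos n m d g kg [ind (repeat 0%nat n)])].
  - intros a b. rewrite dlt_val. unfold one_poly. auto.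
  - intros p [<-|[]] a Ha. unfold ind. rewrite mi_eqb_false; auto. intro; subst; apply Ha, repeat_In.
Qed.

Lemma Q_all n m d g kg :
  (forall x, in_Rd n d x -> exists t, Dset n m d g kg x t) ->
  Qset n m d g kg (pscal (-1) (one_poly n)) -> forall x, in_Rd n d x -> Qset n m d g kg x.
Proof.
  intros HOU Hm1 x Hx. destruct (HOU (pscal (-1) x)) as [t Ht]. apply in_Rd_pscal; auto.
  destruct (Rle_or_lt t 0) as [Ht0|Ht0].
  - eapply Q_ext; [|apply (Q_add _ _ _ _ _ _ _ Ht (Q_scal _ _ _ _ _ (- t) _ ltac:(lra) (Q_one n m d g kg)))].
    intros a b. unfold padd, pscal. csplit; ring.
  - eapply Q_ext; [|apply (Q_add _ _ _ _ _ _ _ Ht (Q_scal _ _ _ _ _ t _ ltac:(lra) Hm1))].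
    intros a b. unfold padd, pscal. csplit; ring.
Qed.

Lemma Ly_lin n d x x' s y :
  Ly n d (fun a b => Cadd (x a b) (Cmul (RtoC s) (x' a b))) y = Ly n d x y + s * Ly n d x' y.
Proof.
  unfold Ly. rewrite !re_lsum, <- rsum_mul_l, <- rsum_add. apply rsum_ext; intros a _.
  rewrite !re_lsum, <- rsum_mul_l, <- rsum_add. apply rsum_ext; intros b _. simpl. ring.
Qed.

Lemma Ly_one n d y : Ly n d (one_poly n) y = re (y (repeat 0%nat n) (repeat 0%nat n)).
Proof.
  unfold Ly. f_equal. set (z := repeat 0%nat n).
  rewrite (lsum_single _ _ z); [| apply NoDup_mis | apply repeat_In |].
  - rewrite (lsum_single _ _ z); [| apply NoDup_mis | apply repeat_In |].
    + unfold one_poly. fold z. rewrite mi_eqb_refl. simpl. csplit; ring.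
    + intros b _ Hb. unfold one_poly. fold z. rewrite (mi_eqb_false b z); auto.
      rewrite Bool.andb_false_r. csplit; ring.
  - intros a _ Ha. apply lsum_zero; intros b _. unfold one_poly. fold z.
    rewrite (mi_eqb_false a z); auto. simpl. csplit; ring.
Qed.

Lemma locmat_herm n e k phi y : herm phi -> herm y ->
  forall a b, Cconj (locmat n e k phi y a b) = locmat n e k phi y b a.
Proof.
  intros H1 H2 a b. unfold locmat. rewrite lsum_conj, lsum_swap. apply lsum_ext; intros G _.
  rewrite lsum_conj. apply lsum_ext; intros H _. rewrite Cconj_mul, H1, H2. auto.
Qed.


Lemma y_feasible n m d g kg w c : ghyp n m d g kg -> in_Rd n d c ->
  Inv n m d g kg (dirc c) (Lidx n d) w ->
  in_Rd n d (ymk n d w) /\ ymk n d w (repeat 0%nat n) (repeat 0%nat n) = C1 /\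
  (forall i, (i <= m)%nat ->
     psd n (d - kfull kg i) (locmat n (d - kfull kg i) (kfull kg i) (gfull n g i) (ymk n d w))).
Proof.
  intros Hg Hc Hinv. destruct (ell_facts n m d g kg c w Hg Hc Hinv) as [Ha [Hb [_ Hd]]].
  split; [|split].
  - split; auto. intros a b Hn. unfold ymk.
    destruct (inb a (mis n d)) eqn:E1, (inb b (mis n d)) eqn:E2; simpl; auto.
    exfalso; apply Hn. unfold inb in E1, E2.
    destruct in_dec; [|discriminate]. destruct in_dec; [|discriminate]. auto.
  - rewrite Ly_one in Hb. pose proof (Hd (repeat 0%nat n) (repeat 0%nat n)) as Hh.
    destruct (ymk n d w (repeat 0%nat n) (repeat 0%nat n)) as [r i] eqn:E. simpl in Hb.
    unfold Cconj in Hh; simpl in Hh. injection Hh; intros. apply C_ext; simpl; lra.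
  - intros i Hi. destruct (Hg i Hi) as [Hgh Hk]. split.
    + intros a b _ _. apply locmat_herm; auto.
    + intros v. set (e := (d - kfull kg i)%nat).
      set (v' := fun a => if inb a (mis n e) then v a else C0).
      assert (Hv' : hdeg_le n e v') by (intros a Ha'; unfold v'; rewrite inb_false; auto).
      transitivity (re (lsum (mis n e) (fun a => lsum (mis n e) (fun b =>
         Cmul (Cconj (v' a)) (Cmul (locmat n e (kfull kg i) (gfull n g i) (ymk n d w) a b) (v' b)))))).
      * unfold e. rewrite <- LQ; auto. apply Ha. apply Q_gen; auto.
      * right. f_equal. apply lsum_ext; intros a Ha'. apply lsum_ext; intros b Hb'.
        unfold v'. rewrite !inb_true; auto.
Qed.

Lemma strong n m d g kg f lam :
  ghyp n m d g kg -> in_Rd n d f ->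
  (forall x, in_Rd n d x -> exists t, Dset n m d g kg x t) ->
  (forall x, moment_values n m d f g kg x -> lam < x) -> sos_values n m d f g kg lam.
Proof.
  intros Hg Hf HOU Hlt.
  set (c := fun a b => Csub (f a b) (Cmul (RtoC lam) (one_poly n a b))).
  assert (Hc : in_Rd n d c).
  { assert (H := in_Rd_padd n d f (pscal (- lam) (one_poly n)) Hf (in_Rd_pscal _ _ _ _ (one_in_Rd n d))).
    destruct H as [H1 H2]. split; intros a b.
    - unfold c. destruct Hf as [Hf1 _]. rewrite <- (Hf1 a b), <- (one_herm n a b). csplit; ring.
    - intros Hn. specialize (H2 a b Hn). unfold padd, pscal in H2. unfold c.
      apply C_ext; [apply (f_equal re) in H2|apply (f_equal im) in H2]; simpl in *; lra. }
  apply NNPP. intros HnQ. change (~ Qset n m d g kg c) in HnQ.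
  assert (Hm1 : ~ Qset n m d g kg (pscal (-1) (one_poly n))).
  { intros H. apply HnQ. apply (Q_all n m d g kg HOU H); auto. }
  assert (Hnil : Inv n m d g kg (dirc c) [] (fun _ => 0)).
  { apply Inv_nil. intros t Ht. apply Rnot_lt_le. intros Hlt0. apply Hm1.
    eapply Q_ext; [|apply (Q_scal _ _ _ _ _ (/ - t) _ ltac:(left; apply Rinv_0_lt_compat; lra) Ht)].
    intros a b. unfold pscal, pzero. csplit; field; lra. }
  destruct (HB_step n m d g kg (dirc c) [] (fun _ => 0) None HOU) as [v [Hv Hv0]]; auto.
  { intros i [<-|[]]. auto. }
  assert (Hvle : v <= 0).
  { apply Hv0. intros al t Ht. simpl. apply Rnot_lt_le. intro Hlt0. apply HnQ.
    eapply Q_ext; [|apply (Q_add _ _ _ _ _ _ _ Ht (Q_scal _ _ _ _ _ (- t) _ ltac:(lra) (Q_one n m d g kg)))].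
    intros a b. unfold padd, pscal, cpsum. simpl. csplit; ring. }
  destruct (HB_list n m d g kg (dirc c) [None] (upd (fun _ => 0) None v) HOU Hv (pidx (mis n d)))
    as [w [Hw HwN]].
  { apply NoDup_L. }
  { intros i Hi. apply dir_in_Rd; auto. }
  change (pidx (mis n d) ++ [None]) with (Lidx n d) in Hw.
  destruct (y_feasible n m d g kg w c Hg Hc Hw) as [Hy1 [Hy2 Hy3]].
  destruct (ell_facts n m d g kg c w Hg Hc Hw) as [_ [Hone [HcL _]]].
  assert (Hmv : moment_values n m d f g kg (Ly n d f (ymk n d w))).
  { exists (ymk n d w). auto. }
  apply Hlt in Hmv.
  rewrite HwN in HcL by (simpl; auto). unfold upd in HcL.
  destruct (I_eq_dec None None); [|congruence].
  assert (Ly n d c (ymk n d w) = Ly n d f (ymk n d w) - lam).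
  { unfold c. rewrite (Ly_ext _ _ _ (fun a b => Cadd (f a b) (Cmul (RtoC (- lam)) (one_poly n a b)))).
    rewrite Ly_lin, Hone. ring. intros. csplit; ring. }
  lra.
Qed.


Theorem mainTheorem10 (n m k : nat) (f : cpoly) (g : nat -> cpoly) (kg : nat -> nat)
  (hn : (1 <= n)%nat) (hm : (1 <= m)%nat)
  (hf : has_deg n k f)
  (hg : forall i, (1 <= i <= m)%nat -> has_deg n (kg i) (g i))
  (hsphere : exists i i' (Rr : R), (1 <= i <= m)%nat /\ (1 <= i' <= m)%nat /\ 0 < Rr /\
       g i = sphere_poly n Rr /\ g i' = popp (sphere_poly n Rr)) :
  forall d : nat, (dmin m k kg <= d)%nat ->
    exists e : ER, e <> MInf /\
      is_ext_inf (moment_values n m d f g kg) e /\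
      is_ext_sup (sos_values n m d f g kg) e.
Proof.
  intros d Hd.
  destruct hsphere as [i [i' [Rr [Hi [Hi' [HR [Hgi Hgi']]]]]]].
  assert (Hki : kg i = 1%nat).
  { apply (sphere_kg n (kg i) Rr hn). rewrite <- Hgi; apply hg; auto. }
  assert (Hg : ghyp n m d g kg).
  { intros j Hj. destruct j as [|j]. split; [apply one_herm|simpl; lia].
    destruct (hg (S j)) as [[Hh _] _]; [lia|]. split; [exact Hh|]. simpl.
    pose proof (dmin_kg m k kg (S j)); lia. }
  assert (Hf : in_Rd n d f).
  { destruct hf as [[Hf1 Hf2] _]. split; auto. intros a b Hn. apply Hf2. intros [Ha Hb]. apply Hn.
    pose proof (dmin_k m k kg). split; apply (mis_mono n k); auto; lia. }
  assert (HOU : forall x, in_Rd n d x -> exists t, Dset n m d g kg x t).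
  { intros x Hx. apply OU; auto. intros a Ha. apply (OU_mono n m d g kg i Rr Hi Hgi Hki (deg a) a); auto. }
  assert (Hwd : forall x lam, moment_values n m d f g kg x -> sos_values n m d f g kg lam -> lam <= x).
  { intros x lam [y [Hy1 [Hy2 [Hy3 ->]]]] Hl.
    pose proof (weak_dual n m d g kg y _ Hg Hy3 Hl) as H.
    rewrite (Ly_ext _ _ _ (fun a b => Cadd (f a b) (Cmul (RtoC (- lam)) (one_poly n a b)))) in H.
    rewrite Ly_lin, Ly_one, Hy2 in H. simpl in H. lra. intros; csplit; ring. }
  assert (Hlb : exists t, forall x, moment_values n m d f g kg x -> - t <= x).
  { destruct (HOU (pscal (-1) f)) as [t Ht]. apply in_Rd_pscal; auto.
    exists t. intros x [y [Hy1 [Hy2 [Hy3 ->]]]]. pose proof (weak_dual _ _ _ _ _ y _ Hg Hy3 Ht) as H.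
    rewrite (Ly_ext _ _ _ (fun a b => Cadd (f a b) (Cmul (RtoC t) (one_poly n a b)))) in H.
    rewrite Ly_lin, Ly_one, Hy2 in H. simpl in H. lra. intros; unfold pscal; csplit; ring. }
  destruct (classic (exists x, moment_values n m d f g kg x)) as [[x0 Hx0]|Hne].
  - destruct Hlb as [t Ht].
    set (E := fun r => moment_values n m d f g kg (- r)).
    assert (HB : bound E).
    { exists t. intros r Hr. apply Ht in Hr. lra. }
    assert (HE : exists r, E r) by (exists (- x0); unfold E; rewrite Ropp_involutive; auto).
    destruct (completeness E HB HE) as [mm [Hm1 Hm2]].
    assert (Hglb1 : forall x, moment_values n m d f g kg x -> - mm <= x).
    { intros x Hx. assert (E (- x)) by (unfold E; rewrite Ropp_involutive; auto).
      apply Hm1 in H. lra. }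
    assert (Hglb2 : forall r', (forall x, moment_values n m d f g kg x -> r' <= x) -> r' <= - mm).
    { intros r' H. assert (mm <= - r'). { apply Hm2. intros z Hz. apply H in Hz. lra. } lra. }
    exists (Fin (- mm)). split; [discriminate|]. split.
    + split; auto.
    + split.
      * intros lam Hl. apply Hglb2. intros x Hx. apply (Hwd x lam); auto.
      * intros r' Hr'. apply Rnot_lt_le. intros Hlt.
        assert (Hs : sos_values n m d f g kg ((r' + - mm) / 2)).
        { apply (strong n m d g kg f); auto. intros x Hx. apply Hglb1 in Hx. lra. }
        apply Hr' in Hs. lra.
  - exists PInf. split; [discriminate|]. split.
    + intros x Hx. apply Hne; eauto.
    + intros M. exists (M + 1). split; [|lra]. apply (strong n m d g kg f); auto.
      intros x Hx. exfalso; apply Hne; eauto.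
Qed.
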